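(* Let $Z\in\mathfrak X_S$ be as in the setup with $A=-2C$. Let $\gamma$ be a symmetric crossing periodic orbit whose crossing points with $\Sigma$ are $p_0=(x_0,y_0,0)$ and $p_1=(-y_0,-x_0,0)$, with $x_0y_0\neq 0$. Then its saltation-corrected monodromy matrix $M$ satisfies $$\det(M)=\Big(\frac{y_0}{x_0}\Big)^2.$$
   Context: Setup. Fix real parameters $A\neq 0$, $C$, $H$, $\Lambda$. Let $\Sigma=\{z=0\}$. Define $$X(x,y,z)=\big(Ax-H(((A-C)^2+1)z-\Lambda),\ \Lambda-(1+C^2)z,\ y+2Cz\big),$$ $$Y(x,y,z)=\big(-\Lambda-(1+C^2)z,\ Ay-H(((A-C)^2+1)z+\Lambda),\ x+2Cz\big).$$ $Z$ equals $X$ on $\{z\ge0\}$ and $Y$ on $\{z<0\}$ (family $\mathfrak X_S$, equivariant under $S(x,y,z)=(-y,-x,-z)$). On $\Sigma$, $X_3=y$ and $Y_3=x$. The periodic orbit runs from $p_0$ to $p_1$ along $X$ in time $t_X$, and from $p_1$ back to $p_0$ along $Y$ in time $t_Y$. Its saltation-corrected monodromy matrix is $$M=S_{Y\to X}(p_0)\,e^{DY t_Y}\,S_{X\to Y}(p_1)\,e^{DX t_X},$$ where $e_3=(0,0,1)^T$ and $$S_{X\to Y}(p)=I+\frac{(Y(p)-X(p))e_3^T}{X_3(p)},\qquad S_{Y\to X}(p)=I-\frac{(Y(p)-X(p))e_3^T}{Y_3(p)}.$$ *)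

(* Defs.v *)
From HB Require Import structures.
From mathcomp Require Import all_boot all_order all_algebra.
From mathcomp Require Import all_classical all_reals all_analysis.
Set Implicit Arguments. Unset Strict Implicit. Unset Printing Implicit Defensive.
Import Order.TTheory GRing.Theory Num.Theory.
Import numFieldNormedType.Exports.
Local Open Scope ring_scope.
Local Open Scope classical_set_scope.

Definition i0 : 'I_3 := @Ordinal 3 0 isT.
Definition i1 : 'I_3 := @Ordinal 3 1 isT.
Definition i2 : 'I_3 := @Ordinal 3 2 isT.

Definition pt {R : ringType} (a b c : R) : 'cV[R]_3 := \col_i [:: a; b; c]`_i.

Definition cx {R : ringType} (p : 'cV[R]_3) : R := p i0 0.
Definition cy {R : ringType} (p : 'cV[R]_3) : R := p i1 0.
Definition cz {R : ringType} (p : 'cV[R]_3) : R := p i2 0.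

Definition e3 {R : ringType} : 'cV[R]_3 := delta_mx i2 0.

Definition XF {R : ringType} (A C H L : R) (p : 'cV[R]_3) : 'cV[R]_3 :=
  pt (A * cx p - H * (((A - C) ^+ 2 + 1) * cz p - L))
     (L - (1 + C ^+ 2) * cz p)
     (cy p + 2 * C * cz p).

Definition YF {R : ringType} (A C H L : R) (p : 'cV[R]_3) : 'cV[R]_3 :=
  pt (- L - (1 + C ^+ 2) * cz p)
     (A * cy p - H * (((A - C) ^+ 2 + 1) * cz p + L))
     (cx p + 2 * C * cz p).

Definition ZF {R : realType} (A C H L : R) (p : 'cV[R]_3) : 'cV[R]_3 :=
  if 0 <= cz p then XF A C H L p else YF A C H L p.

Definition Sinv {R : ringType} (p : 'cV[R]_3) : 'cV[R]_3 :=
  pt (- cy p) (- cx p) (- cz p).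

Definition jac {R : realType} (F : 'cV[R]_3 -> 'cV[R]_3) (p : 'cV[R]_3) : 'M[R]_3 :=
  \matrix_(i < 3, j < 3) ('D_(delta_mx j 0) F p) i 0.

Definition mexp {R : realType} (M : 'M[R]_3) : 'M[R]_3 :=
  lim ((fun n : nat => \sum_(k < n) (k`!%:R)^-1 *: M ^+ k) @ \oo).

Definition salt_XY {R : realType} (X Y : 'cV[R]_3 -> 'cV[R]_3) (p : 'cV[R]_3) : 'M[R]_3 :=
  1%:M + (cz (X p))^-1 *: ((Y p - X p) *m e3^T).
Definition salt_YX {R : realType} (X Y : 'cV[R]_3 -> 'cV[R]_3) (p : 'cV[R]_3) : 'M[R]_3 :=
  1%:M - (cz (Y p))^-1 *: ((Y p - X p) *m e3^T).

(* DX is evaluated at p0 (start of the X-arc), DY at p1 (start of the Y-arc);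
   both fields are affine so their Jacobians are constant anyway. *)
Definition monodromy {R : realType} (X Y : 'cV[R]_3 -> 'cV[R]_3)
  (p0 p1 : 'cV[R]_3) (tX tY : R) : 'M[R]_3 :=
  salt_YX X Y p0 *m mexp (tY *: jac Y p1) *m salt_XY X Y p1 *m mexp (tX *: jac X p0).

Definition solves {R : realType} (F : 'cV[R]_3 -> 'cV[R]_3) (phi : R -> 'cV[R]_3)
  (a b : R) : Prop :=
  forall t : R, a <= t <= b -> is_derive t 1 phi (F (phi t)).

(* Main.v *)
Require Import Defs.
From HB Require Import structures.
From mathcomp Require Import all_boot all_order all_algebra ring.
From mathcomp Require Import all_classical all_reals all_analysis.
Import Order.TTheory GRing.Theory Num.Theory.
Import numFieldNormedType.Exports.
Local Open Scope ring_scope.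
Local Open Scope classical_set_scope.

Lemma det33 (R : comRingType) (A : 'M[R]_3) :
  \det A = A i0 i0 * (A i1 i1 * A i2 i2 - A i1 i2 * A i2 i1)
         - A i0 i1 * (A i1 i0 * A i2 i2 - A i1 i2 * A i2 i0)
         + A i0 i2 * (A i1 i0 * A i2 i1 - A i1 i1 * A i2 i0).
Proof.
rewrite (expand_det_row _ ord0) !big_ord_recl big_ord0 /cofactor.
rewrite !(expand_det_row _ ord0) !big_ord_recl !big_ord0 /cofactor.
rewrite !det_mx11 !mxE /=.
pose a (i j : nat) := A (inord i) (inord j).
have Ax : forall x y : 'I_3, A x y = a (val x) (val y) by move=> x y; rewrite /a !inord_val.
rewrite !Ax /=.
rewrite /bump /=. ring.
Qed.

Lemma mx_cvg_entries (R : realType) (u : nat -> 'M[R]_3) (l : 'M[R]_3) :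
  (forall i j, (fun n => u n i j) @ \oo --> l i j) -> u @ \oo --> l.
Proof.
move=> H; apply/cvg_mx_entourageP => E entE.
apply: filter_forall => i; apply: filter_forall => j.
have := H i j; move/cvg_entourageP => /(_ E entE) h.
near=> n; rewrite inE; near: n; exact: h.
Unshelve. all: by end_near.
Qed.
Lemma cvg_fact_series (R : realType) (a : nat -> R) (B m : R) x :
  0 <= B -> 0 <= m -> (forall k, `|a k| <= B * m ^+ k) ->
  cvgn (pseries (fun k => a k / k`!%:R) x).
Proof.
move=> B0 m0 Ha; apply: normed_cvg.
have Hc := @is_cvg_seriesZ R _ B (is_cvg_series_exp_coeff (m * `|x|)).
apply: (series_le_cvg _ _ _ Hc) => n /=.
- by [].
- by rewrite /exp_coeff /= mulr_ge0 // divr_ge0 // exprn_ge0 // mulr_ge0.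
- rewrite /exp_coeff /= !normrM normfV normr_nat normrX.
  rewrite fctE -[X in _ <= X]/(B * _) exprMn !mulrA mulrAC.
  rewrite ler_wpM2r ?invr_ge0 // ler_wpM2r ?exprn_ge0 //.
Qed.
Lemma pdiffs_fact (R : realType) (a : nat -> R) :
  pseries_diffs (fun k => a k / k`!%:R) = (fun k => a k.+1 / k`!%:R).
Proof.
apply/funext => k; rewrite /pseries_diffs factS natrM invfM.
field; by rewrite pnatr_eq0 -lt0n fact_gt0 /= addrC natr1 pnatr_eq0.
Qed.

Lemma cvg_sum3 (R : realType) (f : 'I_3 -> nat -> R) (L : 'I_3 -> R) :
  (forall l, f l @ \oo --> L l) -> (fun n => \sum_l f l n) @ \oo --> \sum_l L l.
Proof.
move=> H; apply: (@cvg_big R 'I_3 +%R 0 xpredT) => //.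

exact: add_continuous.
Qed.
Section Exp.
Variable R : realType.
Variable M : 'M[R]_3.
Definition mnorm := \sum_i \sum_j `|M i j|.

Lemma mnorm_ge0 : 0 <= mnorm.
Proof. by apply: sumr_ge0 => i _; apply: sumr_ge0. Qed.

Lemma row_le_mnorm i : \sum_l `|M i l| <= mnorm.
Proof.
rewrite /mnorm [X in _ <= X](bigD1 i) //= lerDl.
by apply: sumr_ge0 => k _; apply: sumr_ge0.
Qed.

Lemma powbound k i j : `|(M ^+ k) i j| <= mnorm ^+ k.
Proof.
elim: k i j => [|k IH] i j.
  by rewrite expr0 !mxE; case: (i == j) => /=; rewrite ?normr1 ?normr0.
rewrite exprS -mulmxE mxE.
apply: (le_trans (ler_norm_sum _ _ _)).
apply: (@le_trans _ _ (\sum_l `|M i l| * mnorm ^+ k)).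
  by apply: ler_sum => l _; rewrite normrM ler_wpM2l.
rewrite -mulr_suml exprS ler_wpM2r ?row_le_mnorm //.
by rewrite exprn_ge0 // mnorm_ge0.
Qed.
Definition cc i j := fun k => (M ^+ k) i j / k`!%:R.

Lemma cvg_cc i j x : cvgn (pseries (cc i j) x).
Proof.
apply: (@cvg_fact_series _ _ 1 mnorm) => //; first exact: mnorm_ge0.
by move=> k; rewrite mul1r powbound.
Qed.

Lemma mpart_entry s n i j :
  (\sum_(k < n) (k`!%:R)^-1 *: (s *: M) ^+ k) i j = pseries (cc i j) s n.
Proof.
rewrite /pseries /series /= big_mkord summxE; apply: eq_bigr => k _.
rewrite exprZn scalerA mxE /cc; ring.
Qed.

Lemma mexp_entry s i j : mexp (s *: M) i j = limn (pseries (cc i j) s).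
Proof.
have H : (fun n => \sum_(k < n) (k`!%:R)^-1 *: (s *: M) ^+ k) @ \oo -->
         (\matrix_(i, j) limn (pseries (cc i j) s) : 'M[R]_3).
  apply: mx_cvg_entries => i' j'; rewrite mxE.
  under eq_fun do rewrite mpart_entry.
  exact: cvg_cc.
rewrite /mexp (cvg_lim _ H); first exact: (mxE _ (fun i j => limn (pseries (cc i j) s))).
exact: norm_hausdorff.
Qed.

Lemma pseries_shift i j s :
  pseries (fun k => (M ^+ k.+1) i j / k`!%:R) s =
  (fun n => \sum_l M i l * pseries (cc l j) s n).
Proof.
apply/funext => n; rewrite /pseries /series /= !big_mkord.
under eq_bigr do rewrite mulr_sumr.
rewrite exchange_big /= big_mkord; apply: eq_bigr => k _.
rewrite exprS -mulmxE mxE mulr_suml mulr_suml; apply: eq_bigr => l _.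
by rewrite /cc; ring.
Qed.

Lemma E_derive (s : R) (i j : 'I_3) :
  is_derive s (1 : R) (fun s : R => mexp (s *: M) i j) (\sum_l M i l * mexp (s *: M) l j).
Proof.
have -> : (fun s => mexp (s *: M) i j) = (fun s => limn (pseries (cc i j) s)).
  by apply/funext => x; rewrite mexp_entry.
apply: is_derive_eq.
  apply: (@pseries_snd_diffs _ _ (`|s| + 1)).
  - exact: cvg_cc.
  - rewrite /cc pdiffs_fact.
    apply: (@cvg_fact_series _ _ mnorm mnorm); rewrite ?mnorm_ge0 // => k.
    by rewrite -exprS powbound.
  - rewrite /cc !pdiffs_fact.
    apply: (@cvg_fact_series _ _ (mnorm ^+ 2) mnorm); rewrite ?exprn_ge0 ?mnorm_ge0 // => k.
    by rewrite -exprD add2n powbound.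
  - by rewrite [X in _ < X]ger0_norm ?ltrDl // addr_ge0.
rewrite /cc pdiffs_fact pseries_shift.
apply: cvg_lim; first exact: Rhausdorff.
apply: cvg_sum3 => l.
rewrite mexp_entry.
apply: cvgMl_tmp. exact: cvg_cc.
Qed.

Lemma det_derive (s : R) : \tr M = 0 ->
  is_derive s (1 : R) (fun s : R => \det (mexp (s *: M))) 0.
Proof.
move=> trM.
pose e i j := fun s : R => mexp (s *: M) i j.
have De : forall i j, is_derive s (1:R) (e i j) (\sum_l M i l * e l j s).
  by move=> i j; apply: E_derive.
have -> : (fun s : R => \det (mexp (s *: M))) =
   (e i0 i0 * (e i1 i1 * e i2 i2 - e i1 i2 * e i2 i1)
         - e i0 i1 * (e i1 i0 * e i2 i2 - e i1 i2 * e i2 i0)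
         + e i0 i2 * (e i1 i0 * e i2 i1 - e i1 i1 * e i2 i0))%R.
  by apply/funext => x; rewrite det33.
apply: is_derive_eq.
rewrite !fctE !big_ord_recl !big_ord0.
move: trM; rewrite /mxtrace !big_ord_recl big_ord0.
pose a (i j : nat) := M (inord i) (inord j).
have Ax : forall x y : 'I_3, M x y = a (val x) (val y) by move=> x y; rewrite /a !inord_val.
pose b (i j : nat) := e (inord i) (inord j) s.
have Bx : forall x y : 'I_3, e x y s = b (val x) (val y) by move=> x y; rewrite /b !inord_val.
rewrite !Ax !Bx /= /bump /= !addn0 => tr.
have h22 : a 2%N 2%N = - a 0%N 0%N - a 1%N 1%N.
  by apply/eqP; rewrite -subr_eq0 -tr; apply/eqP; ring.
rewrite h22 /GRing.scale /=; ring.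
Qed.

Lemma mexp0 : mexp (0 *: M) = 1.
Proof.
rewrite /mexp scale0r; apply: lim_near_cst.
  exact: norm_hausdorff.
exists 1%N => //; case => [|n] //= _.
rewrite big_ord_recl expr0 fact0 invr1 scale1r big1 ?addr0 // => k _.
by rewrite exprS mul0r scaler0.
Qed.

Lemma det_mexp : \tr M = 0 -> \det (mexp M) = 1.
Proof.
move=> trM.
have := @is_derive_0_is_cst R (fun s : R => \det (mexp (s *: M))) 1 0 (fun x => det_derive x trM).
by rewrite /= scale1r mexp0 det1.
Qed.
End Exp.

Lemma derive_affine (R : realType) (f : 'cV[R]_3 -> 'cV[R]_3) a v w :
  (forall h : R, f (h *: v + a) = f a + h *: w) -> 'D_v f a = w.
Proof.
move=> Hf; rewrite /derive; apply: lim_near_cst; first exact: norm_hausdorff.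
near=> h; rewrite /= /shift Hf addrC addKr scalerA mulVf ?scale1r //.
near: h; exact: nbhs_dnbhs_neq.
Unshelve. all: by end_near.
Qed.

Definition LX {R : ringType} (A C H : R) (v : 'cV[R]_3) : 'cV[R]_3 :=
  pt (A * cx v - H * (((A - C) ^+ 2 + 1) * cz v))
     (- (1 + C ^+ 2) * cz v)
     (cy v + 2 * C * cz v).
Definition LY {R : ringType} (A C H : R) (v : 'cV[R]_3) : 'cV[R]_3 :=
  pt (- (1 + C ^+ 2) * cz v)
     (A * cy v - H * (((A - C) ^+ 2 + 1) * cz v))
     (cx v + 2 * C * cz v).

Lemma XF_affine (R : realType) (A C H L : R) a v (h : R) :
  XF A C H L (h *: v + a) = XF A C H L a + h *: LX A C H v.
Proof.
apply/matrixP => i j; rewrite !mxE /cx /cy /cz !mxE.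
by case: i => [[|[|[|]]] Hi] //=; ring.
Qed.

Lemma YF_affine (R : realType) (A C H L : R) a v (h : R) :
  YF A C H L (h *: v + a) = YF A C H L a + h *: LY A C H v.
Proof.
apply/matrixP => i j; rewrite !mxE /cx /cy /cz !mxE.
by case: i => [[|[|[|]]] Hi] //=; ring.
Qed.

Lemma derive_XF (R : realType) (A C H L : R) p v :
  'D_v (XF A C H L) p = LX A C H v.
Proof. by apply: derive_affine => h; apply: XF_affine. Qed.

Lemma derive_YF (R : realType) (A C H L : R) p v :
  'D_v (YF A C H L) p = LY A C H v.
Proof. by apply: derive_affine => h; apply: YF_affine. Qed.

Lemma trX (R : realType) (A C H L : R) p : \tr (jac (XF A C H L) p) = A + 2 * C.
Proof.
rewrite /mxtrace /jac !big_ord_recl big_ord0.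
rewrite !mxE !derive_XF.
rewrite /LX /cx /cy /cz !mxE /=; ring.
Qed.

Lemma trY (R : realType) (A C H L : R) p : \tr (jac (YF A C H L) p) = A + 2 * C.
Proof.
rewrite /mxtrace /jac !big_ord_recl big_ord0.
rewrite !mxE !derive_YF.
rewrite /LY /cx /cy /cz !mxE /=; ring.
Qed.

Lemma det_salt (R : realType) (c : R) (u : 'cV[R]_3) :
  \det (1%:M + c *: (u *m e3^T)) = 1 + c * u i2 0.
Proof.
rewrite det33 /e3 !mxE !big_ord1 !mxE /=; ring.
Qed.

Lemma prod4 (R : realType) (a b c d u : R) :
  a = u -> b = 1 -> c = u -> d = 1 -> a * b * c * d = u ^+ 2.
Proof. by move=> -> -> -> ->; rewrite !mulr1 expr2. Qed.

Theorem mainTheorem9 (R : realType) (A C H L x0 y0 tX tY : R)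
  (phiX phiY : R -> 'cV[R]_3) :
  A != 0 -> A = - (2 * C) -> x0 * y0 != 0 ->
  let X := XF A C H L in
  let Y := YF A C H L in
  let p0 := pt x0 y0 0 in
  let p1 := pt (- y0) (- x0) 0 in
  (* p1 = S p0: symmetric orbit *)
  p1 = Sinv p0 ->
  (* crossing condition at both crossing points *)
  0 < cz (X p0) * cz (Y p0) -> 0 < cz (X p1) * cz (Y p1) ->
  (* X-arc from p0 to p1 in time tX, inside z > 0 *)
  0 < tX -> phiX 0 = p0 -> phiX tX = p1 -> solves X phiX 0 tX ->
  (forall t, 0 < t < tX -> 0 < cz (phiX t)) ->
  (* Y-arc from p1 back to p0 in time tY, inside z < 0 *)
  0 < tY -> phiY 0 = p1 -> phiY tY = p0 -> solves Y phiY 0 tY ->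
  (forall t, 0 < t < tY -> cz (phiY t) < 0) ->
  \det (monodromy X Y p0 p1 tX tY) = (y0 / x0) ^+ 2.
Proof.
move=> _ hA hxy X Y p0 p1 _ _ _ _ _ _ _ _ _ _ _ _ _.
have tr0 : A + 2 * C = 0 by rewrite hA addrC subrr.
rewrite /monodromy !det_mulmx.
have h1 : \det (mexp (tX *: jac X p0)) = 1.
  apply: (@det_mexp R (tX *: jac X p0)). by rewrite mxtraceZ (@trX R A C H L p0) tr0 mulr0.
have h2 : \det (mexp (tY *: jac Y p1)) = 1.
  apply: (@det_mexp R (tY *: jac Y p1)); by rewrite mxtraceZ (@trY R A C H L p1) tr0 mulr0.
move: hxy; rewrite mulf_eq0 negb_or => /andP[hx hy].
have h3 : \det (salt_YX X Y p0) = y0 / x0.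
  rewrite /salt_YX -scaleNr det_salt.
  rewrite /X /Y /p0 /XF /YF /cx /cy /cz.
  rewrite !mxE /= !mulr0 !addr0. field. exact: hx.
have h4 : \det (salt_XY X Y p1) = y0 / x0.
  rewrite /salt_XY det_salt.
  rewrite /X /Y /p1 /XF /YF /cx /cy /cz.
  rewrite !mxE /= !mulr0 !addr0. field. exact: hx.
exact: (@prod4 R _ _ _ _ _ h3 h2 h4 h1).
Qed.
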